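(* Let $n\ge1$, $h>0$, and let $f$ be a real function defined at the points $x_m=mh$, $m=-n,\dots,n$; write $f_m=f(mh)$. Let $P_{2n}$ be the unique polynomial of degree at most $2n$ with $P_{2n}(mh)=f_m$ for $m=-n,\dots,n$. Then $$P_{2n}''(0)=\frac{1}{h^2}\sum_{m=1}^{n}\alpha_m^{(2)}(n)\,(f_m-2f_0+f_{-m}),\qquad\text{where } \alpha_m^{(2)}(n)=\frac{1}{m^2\,\pi_m(n)},\quad \pi_m(n)=\prod_{k=1,\,k\ne m}^{n}\left(1-\frac{m^2}{k^2}\right).$$ *)

(* Defs.v *)
From HB Require Import structures.
From mathcomp Require Import all_boot all_order all_algebra.
Set Implicit Arguments. Unset Strict Implicit. Unset Printing Implicit Defensive.
Import Order.TTheory GRing.Theory Num.Theory.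
Local Open Scope ring_scope.

Definition pi_coef {R : realFieldType} (n m : nat) : R :=
  \prod_(1 <= k < n.+1 | k != m) (1 - (m%:R ^+ 2) / (k%:R ^+ 2)).

Definition alpha2 {R : realFieldType} (n m : nat) : R :=
  1 / ((m%:R ^+ 2) * pi_coef n m).

(* Main.v *)
Require Import Defs.
From HB Require Import structures.
From mathcomp Require Import all_boot all_order all_algebra.
From mathcomp Require Import ring lra.
Import Order.TTheory GRing.Theory Num.Theory.
Local Open Scope ring_scope.

Section S.
Variable R : realFieldType.
Implicit Types P : {poly R}.

Lemma L1 P : (P^`(2)).[0] = P`_2 *+ 2.
Proof. by rewrite horner_coef0 coef_derivn addn0. Qed.

Lemma L2 P (x : R) : P.[x] + P.[-x] = 2 * (even_poly P).[x ^+ 2].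
Proof.
rewrite -{1 2}[P]poly_even_odd !(hornerD, hornerM, hornerX, horner_comp, hornerXn).
by rewrite mulrNN -expr2; ring.
Qed.

Lemma L3 P : (drop_poly 1 (even_poly P)).[0] = P`_2.
Proof. by rewrite horner_coef0 coef_drop_poly coef_even_poly. Qed.

Lemma L4 P (y : R) : (drop_poly 1 (even_poly P)).[y] * y = (even_poly P).[y] - P.[0].
Proof.
rewrite -{2}[even_poly P](poly_take_drop 1) hornerD hornerM hornerX.
rewrite horner_coef0 /take_poly.
have -> : (\poly_(i < 1) (even_poly P)`_i) = ((even_poly P)`_0)%:P.
  by apply/polyP => i; rewrite coef_poly coefC; case: i.
by rewrite hornerC coef_even_poly addrC addKr.
Qed.
Definition xn (h : R) (i : nat) : R := ((i.+1)%:R * h) ^+ 2.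

Lemma xn_inj h : 0 < h -> injective (xn h).
Proof.
move=> hp i j; rewrite /xn !exprMn => /mulIf.
have -> : h ^+ 2 != 0 by rewrite expf_neq0 // gt_eqF.
move=> /(_ isT) /eqP; rewrite -!natrX eqr_nat eqn_exp2r // eqSS => /eqP //.
Qed.

Lemma xn_neq0 h i : 0 < h -> xn h i != 0.
Proof. by move=> hp; rewrite /xn expf_neq0 // mulf_neq0 ?pnatr_eq0 ?gt_eqF. Qed.

Lemma lag0 n h (i : 'I_n) : (0 < n)%N -> 0 < h ->
  (tnth (lagrange n (xn h)) i : {poly R}).[0] = (pi_coef n i.+1)^-1.
Proof.
move=> n0 hp; rewrite (lagrangeE n0 (xn_inj h hp)) /= hornerM hornerC !horner_prod.
under eq_bigr do rewrite hornerXsubC.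
under [X in _ * X]eq_bigr do rewrite hornerXsubC.
rewrite /pi_coef big_add1 /= big_mkord.
rewrite [in RHS](eq_bigl (fun j : 'I_n => j != i)); last by move=> j; rewrite eqSS.
rewrite -prodfV -prodfV -big_split /=; apply: eq_bigr => j ji.
have xj := xn_neq0 h j hp.
rewrite /xn; rewrite /xn in xj.
have hn : h != 0 by rewrite gt_eqF.
have jn : (j.+1)%:R != 0 :> R by rewrite pnatr_eq0.
rewrite !exprMn in xj *.
have -> : (1 - (i.+1)%:R ^+ 2 / (j.+1)%:R ^+ 2) = (((i.+1)%:R * h) ^+ 2 - ((j.+1)%:R * h) ^+ 2) / (0 - ((j.+1)%:R * h) ^+ 2).
  rewrite !exprMn; field; by rewrite hn nat1r.
by rewrite invf_div !exprMn mulrC.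
Qed.
Lemma pi_neq0 n m : pi_coef n m != 0 :> R.
Proof.
rewrite /pi_coef prodf_seq_neq0; apply/allP => k; rewrite mem_index_iota.
case/andP=> k1 _; apply/implyP => km.
have kn : k%:R != 0 :> R by rewrite pnatr_eq0 -lt0n.
have -> : 1 - m%:R ^+ 2 / k%:R ^+ 2 = (k%:R ^+ 2 - m%:R ^+ 2) / k%:R ^+ 2 :> R.
  by field.
rewrite mulf_neq0 ?invr_eq0 ?expf_neq0 // subr_eq0 -!natrX eqr_nat eqn_exp2r //.
Qed.
End S.

From mathcomp Require Import zify.

Theorem mainTheorem5 (R : realFieldType) (n : nat) (h : R) (f : R -> R)
    (P : {poly R}) :
  (1 <= n)%N -> 0 < h ->
  (size P <= (2 * n).+1)%N ->
  (forall m : int, - (n%:Z) <= m <= n%:Z -> P.[m%:~R * h] = f (m%:~R * h)) ->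
  (P^`(2)).[0] =
    h ^- 2 * \sum_(1 <= m < n.+1)
       alpha2 n m * (f (m%:R * h) - 2 * f (0 * h) + f ((- (m%:~R : R)) * h)).
Proof.
move=> n1 hp sP HP.
have sE : (size (even_poly P) <= n.+1)%N.
  rewrite (even_polyE (s := n.+1)) ?size_poly //.
  rewrite -muln2; lia.
have sT : (size (drop_poly 1 (even_poly P)) <= n)%N.
  rewrite size_drop_poly; lia.
rewrite L1 -(L3 _ P) (lagrange_gen n1 (xn_inj _ h hp) sT) horner_sum.
rewrite big_add1 big_mkord /= mulr_sumr -sumrMnl; apply: eq_bigr => i _.
rewrite hornerM hornerC (lag0 _ _ _ _ n1 hp).
have Hb : forall m : nat, (m <= n)%N ->
    f (m%:R * h) = P.[m%:R * h] /\ f (- (m%:~R : R) * h) = P.[- (m%:~R : R) * h].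
  move=> m mn; split.
    have hm : - (n%:Z) <= Posz m <= n%:Z by apply/andP; split; lia.
    exact: (esym (HP (Posz m) hm)).
  have hm : - (n%:Z) <= - Posz m <= n%:Z by apply/andP; split; lia.
  by rewrite -intrN (HP _ hm).
have [H1 H2] := Hb i.+1 (ltn_ord i).
have [H0 _] := Hb 0%N (leq0n n).
rewrite H1 H2 H0 mul0r pmulrn.
set T := drop_poly 1 (even_poly P).
rewrite (_ : P.[i.+1%:R * h] - 2 * P.[0] + P.[- (i.+1%:R) * h] = 2 * (T.[xn R h i] * xn R h i)); last first.
  by rewrite L4 mulrBr -L2 /xn mulNr; ring.
have := pi_neq0 R n i.+1.
rewrite /alpha2 /xn => pn.
have hn : h != 0 by rewrite gt_eqF.
by field; rewrite pn hn nat1r pnatr_eq0.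
Qed.
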